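(* Let $P_n(x)=\sum_{k=0}^{n}\frac{(q^{-n},q^{n+1};q)_k\,(q(1+(q-1)x);q)_k\,q^k}{(q,q,q;q)_k}$ for $n\ge 0$ (this is the $q$-Hahn type family ${}_3\phi_2\!\left(q^{-n},q^{c+d+n+1},q(1+(q-1)x);q^{c+1},q^{d+1};q,q\right)$ with $c=d=0$). Then the $q$-Bernoulli–Carlitz numbers $(\beta_n)_{n\ge0}$ are the moments of the orthogonal polynomials $(P_n)_{n\ge 0}$.
   Context: $q$ is an indeterminate; we work over $\mathbb{Q}(q)$. The $q$-Bernoulli–Carlitz numbers $\beta_n\in\mathbb{Q}(q)$ are defined by: for all $n\ge0$, $q\sum_{k=0}^{n}\binom{n}{k}q^k\beta_k-\beta_n$ equals $q-1$ if $n=0$, $1$ if $n=1$, and $0$ if $n>1$ (so $\beta_0=1$, $\beta_1=-1/(q+1)$). The $q$-Pochhammer symbol is $(a;q)_k=(1-a)(1-qa)\cdots(1-q^{k-1}a)$ and $(a_1,\dots,a_r;q)_k=\prod_i(a_i;q)_k$. A sequence $(m_n)_{n\ge0}$ with $m_0=1$ is called the sequence of moments of a family of polynomials $(P_n)_{n\ge0}$ ($\deg P_n=n$) if the linear functional $L$ on $\mathbb{Q}(q)[x]$ with $L(x^n)=m_n$ makes the family orthogonal: $L(P_mP_n)=0$ for $m\ne n$ and $L(P_n^2)\neq0$. *)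

(* Defs.v *)
From HB Require Import structures.
From mathcomp Require Import all_boot all_order all_algebra.
From mathcomp Require Export fraction.
Set Implicit Arguments. Unset Strict Implicit. Unset Printing Implicit Defensive.
Import Order.TTheory GRing.Theory Num.Theory.
Local Open Scope ring_scope.

Definition Qq : fieldType := {fraction {poly rat}}.
Definition q : Qq := FracField.tofrac ('X : {poly rat}).

Definition qpoch (R : comNzRingType) (qq a : R) (k : nat) : R :=
  \prod_(i < k) (1 - qq ^+ i * a).

Definition carlitz_rhs (n : nat) : Qq :=
  if n == 0%N then q - 1 else if n == 1%N then 1 else 0.

Definition is_qBernoulliCarlitz (b : nat -> Qq) : Prop :=
  forall n : nat,
    q * (\sum_(k < n.+1) 'C(n, k)%:R * q ^+ k * b k) - b n = carlitz_rhs n.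

Definition Pn (n : nat) : {poly Qq} :=
  \sum_(k < n.+1)
    ((qpoch q (q ^- n) k * qpoch q (q ^+ n.+1) k * q ^+ k
        / (qpoch q q k * qpoch q q k * qpoch q q k))
     *: qpoch (q%:P) (q%:P * (1 + (q - 1)%:P * 'X)) k).

Definition Lfun (m : nat -> Qq) (p : {poly Qq}) : Qq :=
  \sum_(i < size p) p`_i * m i.

Definition moments_of (m : nat -> Qq) (P : nat -> {poly Qq}) : Prop :=
  m 0%N = 1 /\
  (forall n, size (P n) = n.+1) /\
  (forall i j, i <> j -> Lfun m (P i * P j) = 0) /\
  (forall n, Lfun m (P n * P n) != 0).

(* Main.v *)
Require Import Defs.
From HB Require Import structures.
From mathcomp Require Import all_boot all_order all_algebra.
From mathcomp Require Import ring.
Local Open Scope ring_scope.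
Import GRing.Theory.


Section L.
Variable m : nat -> Qq.

Lemma LfunW (p : {poly Qq}) N : (size p <= N)%N -> Lfun m p = \sum_(i < N) p`_i * m i.
Proof.
move=> H; rewrite /Lfun (big_ord_widen _ (fun i => p`_i * m i) H) big_mkcond /=.
apply: eq_bigr => i _; case: ifP => // /negbT; rewrite -leqNgt => Hi.
by rewrite nth_default ?mul0r.
Qed.

Lemma LfunD (p r : {poly Qq}) : Lfun m (p + r) = Lfun m p + Lfun m r.
Proof.
have H := size_add p r.
rewrite !(@LfunW _ (maxn (size p) (size r))) ?leq_maxl ?leq_maxr //.
by rewrite -big_split; apply: eq_bigr => i _; rewrite coefD mulrDl.
Qed.

Lemma LfunZ a (p : {poly Qq}) : Lfun m (a *: p) = a * Lfun m p.
Proof.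
rewrite !(@LfunW _ (size p)) ?size_scale_leq // mulr_sumr.
by apply: eq_bigr => i _; rewrite coefZ mulrA.
Qed.

Lemma Lfun0 : Lfun m 0 = 0.
Proof. by rewrite /Lfun size_poly0 big_ord0. Qed.

Lemma LfunN (p : {poly Qq}) : Lfun m (- p) = - Lfun m p.
Proof. by rewrite -scaleN1r LfunZ mulN1r. Qed.

Lemma LfunB (p r : {poly Qq}) : Lfun m (p - r) = Lfun m p - Lfun m r.
Proof. by rewrite LfunD LfunN. Qed.

Lemma LfunCM c (p : {poly Qq}) : Lfun m (c%:P * p) = c * Lfun m p.
Proof. by rewrite mul_polyC LfunZ. Qed.

Lemma Lfun_sum (I : Type) (r : seq I) (P : pred I) (F : I -> {poly Qq}) :
  Lfun m (\sum_(i <- r | P i) F i) = \sum_(i <- r | P i) Lfun m (F i).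
Proof.
elim: r => [|x r IH]; first by rewrite !big_nil Lfun0.
by rewrite !big_cons; case: (P x); rewrite ?LfunD IH.
Qed.

Lemma LfunXn k : Lfun m ('X^k) = m k.
Proof.
rewrite (@LfunW _ k.+1) ?size_polyXn // big_ord_recr /= big1 ?add0r.
  by rewrite coefXn eqxx mul1r.
by move=> i _; rewrite coefXn (ltn_eqF (ltn_ord i)) mul0r.
Qed.

End L.

Definition sX : {poly Qq} := q%:P * 'X + 1.

Lemma Lfun_sX m i : Lfun m (sX ^+ i) = \sum_(k < i.+1) 'C(i, k)%:R * q ^+ k * m k.
Proof.
rewrite /sX exprD1n Lfun_sum; apply: eq_bigr => k _.
rewrite exprMn -rmorphXn -mulrnAl -rmorphMn LfunCM LfunXn.
by rewrite -mulr_natl.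
Qed.

Lemma FE m : is_qBernoulliCarlitz m -> forall f : {poly Qq},
  q * Lfun m (f \Po sX) - Lfun m f = (q - 1) * f`_0 + f`_1.
Proof.
move=> Hm f.
rewrite comp_polyE Lfun_sum.
under eq_bigr do rewrite LfunZ Lfun_sX.
rewrite /Lfun mulr_sumr -sumrB.
under eq_bigr do rewrite mulrCA -mulrBr Hm.
rewrite (big_ord_widen _ (fun i => f`_i * carlitz_rhs i) (leq_addr 2 (size f))).
rewrite big_mkcond /= (eq_bigr (fun i : 'I_(size f + 2) => f`_i * carlitz_rhs i)).
  rewrite addnC !big_ord_recl /= big1 ?addr0.
    by rewrite /carlitz_rhs /= mulr1 mulrC.
  by move=> i _; rewrite /carlitz_rhs /= mulr0.
move=> i _; case: ifP => // /negbT; rewrite -leqNgt => Hi.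
by rewrite nth_default ?mul0r.
Qed.

Set Implicit Arguments. Unset Strict Implicit.

Lemma q_neq0 : q != 0.
Proof. by rewrite /q tofrac_eq0 polyX_eq0. Qed.

Lemma qpow_eq (a b : nat) : (q ^+ a == q ^+ b) = (a == b).
Proof.
rewrite /q -!tofracXn tofrac_eq.
apply/eqP/eqP => [H|->] //.
have := congr1 (fun p : {poly rat} => size p) H; rewrite /= !size_polyXn; by case.
Qed.

Section Gen.
Variable R : fieldType.
Variable x : R.
Hypothesis x_neq0 : x != 0.
Hypothesis xpow_eq : forall a b : nat, (x ^+ a == x ^+ b) = (a == b).

Lemma xpow_neq1 n : (0 < n)%N -> x ^+ n != 1.
Proof. move=> H; rewrite -(expr0 x) xpow_eq -lt0n; exact: H. Qed.

Lemma subx_neq0 n : (0 < n)%N -> 1 - x ^+ n != 0.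
Proof. move=> H; rewrite subr_eq0 eq_sym; exact: xpow_neq1. Qed.

Definition gsX : {poly R} := x%:P * 'X + 1.
Definition gzP : {poly R} := 1 + (x - 1)%:P * 'X.
Definition gwP : {poly R} := x%:P * gzP.
Definition geP k : {poly R} := qpoch (x%:P) gwP k.
Definition guP : {poly R} := 1 - gzP.
Definition gA k : R := qpoch x x k.

Lemma ge_rec k : geP k.+1 = geP k * (1 - x%:P ^+ k * gwP).
Proof. by rewrite /geP /qpoch big_ord_recr. Qed.

Lemma ge0 : geP 0 = 1.
Proof. by rewrite /geP /qpoch big_ord0. Qed.

Lemma gA_rec k : gA k.+1 = gA k * (1 - x ^+ k.+1).
Proof. by rewrite /gA /qpoch big_ord_recr /= exprSr. Qed.

Lemma gA0 : gA 0 = 1.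
Proof. by rewrite /gA /qpoch big_ord0. Qed.

Lemma gA_neq0 k : gA k != 0.
Proof.
elim: k => [|k IH]; first by rewrite gA0; exact: oner_neq0.
rewrite gA_rec; apply: mulf_neq0; [exact: IH | exact: subx_neq0].
Qed.

Lemma gzP_comp : gzP \Po gsX = gwP.
Proof.
rewrite /gwP /gzP /gsX comp_polyD comp_polyM comp_polyX comp_polyC -polyC1 comp_polyC.
rewrite !rmorphB /= polyC1; ring.
Qed.

Lemma gwP_comp : gwP \Po gsX = x%:P * gwP.
Proof. by rewrite /gwP comp_polyM comp_polyC gzP_comp. Qed.

Lemma geP_comp k : geP k \Po gsX = \prod_(i < k) (1 - x%:P ^+ i.+1 * gwP).
Proof.
elim: k => [|k IH].
  by rewrite ge0 big_ord0 -polyC1 comp_polyC.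
rewrite ge_rec comp_polyM IH big_ord_recr /=; congr (_ * _).
rewrite comp_polyB -polyC1 comp_polyC polyC1 comp_polyM gwP_comp.
rewrite -rmorphXn comp_polyC /= rmorphXn exprS; ring.
Qed.

Lemma gue_comp k : (guP * geP k) \Po gsX = geP k.+1.
Proof.
rewrite comp_polyM geP_comp /geP /qpoch big_ord_recl /= expr0 mul1r.
by rewrite /guP comp_polyB -polyC1 comp_polyC polyC1 gzP_comp.
Qed.

Lemma guPe k : guP * geP k =
  (1 - (x ^+ k.+1)^-1)%:P * geP k + ((x ^+ k.+1)^-1)%:P * geP k.+1.
Proof.
set c := (x ^+ k.+1)^-1.
have H : c%:P * (x%:P ^+ k * gwP) = gzP.
  rewrite /gwP mulrA mulrA -rmorphXn -!rmorphM /=.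
  have -> : c * (x ^+ k * x) = 1.
    by rewrite /c -exprSr mulVf // expf_neq0.
  by rewrite mul1r.
rewrite ge_rec rmorphB /= polyC1 /guP -H; ring.
Qed.

Lemma geP_at0 k : (geP k)`_0 = gA k.
Proof.
rewrite -horner_coef0 /geP /gA /qpoch horner_prod; apply: eq_bigr => i _.
rewrite hornerD hornerN hornerC hornerM -rmorphXn hornerC /gwP hornerM hornerC.
by rewrite /gzP hornerD hornerC hornerM hornerC hornerX mulr0 addr0 mulr1.
Qed.

Lemma guP0 : guP`_0 = 0.
Proof. by rewrite /guP /gzP coefB coefD coef1 coefCM coefX /= mulr0 addr0 subrr. Qed.

Lemma guP1 : guP`_1 = 1 - x.
Proof. by rewrite /guP /gzP coefB coefD coef1 coefCM coefX /= mulr1 !add0r opprB. Qed.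

Lemma coef1_mul (f g : {poly R}) : (f * g)`_1 = f`_0 * g`_1 + f`_1 * g`_0.
Proof. by rewrite coefM big_ord_recr /= big_ord_recr /= big_ord0 add0r. Qed.

Lemma coef0_mul (f g : {poly R}) : (f * g)`_0 = f`_0 * g`_0.
Proof. by rewrite coefM big_ord_recr /= big_ord0 add0r. Qed.

End Gen.


Section Gen2.
Variable R : fieldType.
Variable x : R.
Hypothesis x_neq0 : x != 0.
Hypothesis xpow_eq : forall a b : nat, (x ^+ a == x ^+ b) = (a == b).

Definition gFc k j := (1 - x) * gA x k ^+ 2 * gA x j ^+ 2 / gA x (k + j).+1.

Let sub1 n : 1 - x ^+ n.+1 != 0.
Proof. exact: (subx_neq0 xpow_eq). Qed.

Lemma xn_neq0 n : x ^+ n != 0.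
Proof. exact: expf_neq0. Qed.

Lemma uniq_sol (c y z : R) : c != 0 -> c * y = c * z -> y = z.
Proof. by move=> Hc /(mulfI Hc). Qed.

Lemma R2sol k y :
  x * y - ((1 - (x ^+ k.+1)^-1) * gFc k 0 + (x ^+ k.+1)^-1 * y) = (1 - x) * gA x k ->
  y = gFc k.+1 0.
Proof.
move=> H.
have Hc : x - (x ^+ k.+1)^-1 != 0.
  rewrite subr_eq0; apply/negP => /eqP E.
  have : x * x ^+ k.+1 = 1 by rewrite {1}E mulVf // xn_neq0.
  rewrite -exprS; apply/eqP; exact: (xpow_neq1 xpow_eq).
apply: (uniq_sol Hc).
have Hk := gA_neq0 xpow_eq k.
have H1 := sub1 k. have H2 := sub1 k.+1.
rewrite !exprS in H1 H2 H Hc *.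
have E : x * y - (x * x ^+ k)^-1 * y = (1 - x) * gA x k + (1 - (x * x ^+ k)^-1) * gFc k 0.
  by rewrite -H; ring.
rewrite mulrBl E /gFc !addn0 !gA_rec !gA0 !exprS.
field.
by rewrite ?Hk ?H1 ?H2 ?x_neq0 ?xn_neq0.
Qed.

Lemma R1sol k j y :
  x * y = (1 - (x ^+ k.+1)^-1) * (1 - (x ^+ j.+1)^-1) * gFc k j
        + (1 - (x ^+ k.+1)^-1) * (x ^+ j.+1)^-1 * gFc k j.+1
        + (x ^+ k.+1)^-1 * (1 - (x ^+ j.+1)^-1) * gFc k.+1 j
        + (x ^+ k.+1)^-1 * (x ^+ j.+1)^-1 * y ->
  y = gFc k.+1 j.+1.
Proof.
move=> H.
have Hc : x - (x ^+ k.+1)^-1 * (x ^+ j.+1)^-1 != 0.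
  rewrite subr_eq0 -invfM -exprD; apply/negP => /eqP E.
  have : x * x ^+ (k.+1 + j.+1) = 1 by rewrite {1}E mulVf // xn_neq0.
  rewrite -exprS; apply/eqP; exact: (xpow_neq1 xpow_eq).
apply: (uniq_sol Hc).
have Hk := gA_neq0 xpow_eq k. have Hj := gA_neq0 xpow_eq j.
have Hkj := gA_neq0 xpow_eq (k + j).
have H1 := sub1 k. have H2 := sub1 j. have H3 := sub1 (k + j).+1.
have H4 := sub1 (k + j).+2. have H5 := sub1 (k+j).
have Xk := xn_neq0 k. have Xj := xn_neq0 j.
rewrite !exprS !exprD in H1 H2 H3 H4 H5 H Hc *.
have E : (x - (x * x ^+ k)^-1 * (x * x ^+ j)^-1) * y =
    (1 - (x * x ^+ k)^-1) * (1 - (x * x ^+ j)^-1) * gFc k j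
  + (1 - (x * x ^+ k)^-1) * (x * x ^+ j)^-1 * gFc k j.+1
  + (x * x ^+ k)^-1 * (1 - (x * x ^+ j)^-1) * gFc k.+1 j.
  by rewrite mulrBl H; ring.
rewrite E /gFc !addSn !addnS !gA_rec !exprS !exprD.
field.
by rewrite ?H1 ?H2 ?H3 ?H4 ?H5 ?Hk ?Hj ?Hkj ?Xk ?Xj ?x_neq0.
Qed.

End Gen2.

Lemma gFc_sym (R : fieldType) (x : R) k j : gFc x k j = gFc x j k.
Proof. rewrite /gFc addnC; congr (_ / _); ring. Qed.

Lemma expand4 (R : comNzRingType) (a b c d : R) (E1 E2 G1 G2 : {poly R}) :
  (a%:P * E1 + b%:P * E2) * (c%:P * G1 + d%:P * G2) =
  (a * c)%:P * (E1 * G1) + (a * d)%:P * (E1 * G2) + (b * c)%:P * (E2 * G1)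
  + (b * d)%:P * (E2 * G2).
Proof. rewrite !rmorphM /=; ring. Qed.

Lemma expand2 (R : comNzRingType) (a b : R) (E1 E2 : {poly R}) :
  a%:P * E1 + b%:P * E2 = a%:P * (E1 * 1) + b%:P * (E2 * 1).
Proof. by rewrite !mulr1. Qed.

Lemma qpow_eq' (a b : nat) : (q ^+ a == q ^+ b) = (a == b).
Proof. exact: qpow_eq. Qed.

Section LQ.
Variable m : nat -> Qq.
Hypothesis Hm : is_qBernoulliCarlitz m.

Definition F k j := Lfun m (geP q k * geP q j).

Lemma F_R1 k j :
  q * F k.+1 j.+1 = (1 - (q ^+ k.+1)^-1) * (1 - (q ^+ j.+1)^-1) * F k j
        + (1 - (q ^+ k.+1)^-1) * (q ^+ j.+1)^-1 * F k j.+1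
        + (q ^+ k.+1)^-1 * (1 - (q ^+ j.+1)^-1) * F k.+1 j
        + (q ^+ k.+1)^-1 * (q ^+ j.+1)^-1 * F k.+1 j.+1.
Proof.
have := @FE m Hm ((guP q * geP q k) * (guP q * geP q j)).
rewrite comp_polyM !gue_comp !coef1_mul !coef0_mul !guP0 !mul0r !mulr0 !addr0.
move/eqP; rewrite subr_eq0 => /eqP ->.
rewrite !(guPe q_neq0) (@expand4 Qq) !LfunD !LfunCM.
by rewrite /F.
Qed.

Lemma F_R2 k :
  q * F k.+1 0 - ((1 - (q ^+ k.+1)^-1) * F k 0 + (q ^+ k.+1)^-1 * F k.+1 0)
  = (1 - q) * gA q k.
Proof.
have := @FE m Hm (guP q * geP q k).
rewrite !gue_comp !coef1_mul !coef0_mul !guP0 guP1 geP_at0 !mul0r !mulr0 !add0r.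
rewrite (guPe q_neq0) LfunD !LfunCM /F ge0 !mulr1 => ->.
done.
Qed.

Lemma m0 : m 0 = 1.
Proof.
have := Hm 0; rewrite big_ord1 /carlitz_rhs /= expr0 mulr1 mul1r => H.
have Hq : q - 1 != 0.
  rewrite subr_eq0; apply/negP => /eqP E.
  by have := qpow_eq 1 0; rewrite expr1 expr0 E eqxx.
apply: (uniq_sol Hq); rewrite mulr1 -[RHS]H; ring.
Qed.

Lemma F00 : F 0 0 = 1.
Proof. by rewrite /F ge0 mulr1 -(expr0 'X) LfunXn m0. Qed.

Lemma gFc00 : gFc q 0 0 = 1.
Proof.
rewrite /gFc gA0 addn0 (gA_rec q 0) gA0 expr1n !mul1r !mulr1 expr1.
apply: divff; rewrite subr_eq0; apply/negP => /eqP E.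
by have := qpow_eq 1 0; rewrite expr1 expr0 -E eqxx.
Qed.

Lemma F_closed k j : F k j = gFc q k j.
Proof.
have Hq := q_neq0.
have Hqe := qpow_eq.
suff : forall n k j, (k + j <= n)%N -> F k j = gFc q k j by move/(_ (k + j) k j (leqnn _)).
elim=> [|n IH] k1 j1 Hn.
  move: Hn; rewrite leqn0 addn_eq0 => /andP [/eqP -> /eqP ->].
  by rewrite F00 gFc00.
have Hk0 : forall k, (k <= n)%N -> F k.+1 0 = gFc q k.+1 0.
  move=> k2 Hk2; apply: (R2sol Hq Hqe); rewrite -(IH k2 0%N) ?addn0 //.
  exact: F_R2.
case: k1 j1 Hn => [|k'] [|j'] Hn.
- by rewrite F00 gFc00.
- by rewrite /F mulrC -/(F j'.+1 0) Hk0 // gFc_sym.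
- by rewrite Hk0 // -(addn0 k') -ltnS.
- rewrite addSn addnS !ltnS in Hn.
  apply: (R1sol Hq Hqe).
  rewrite -(IH k' j'); last exact: ltnW.
  rewrite -(IH k' j'.+1); last by rewrite addnS.
  rewrite -(IH k'.+1 j'); last by rewrite addSn.
  exact: F_R1.
Qed.

End LQ.


Section Newton.
Variable R : fieldType.
Variable x : R.
Hypothesis x_neq0 : x != 0.
Hypothesis xpow_eq : forall a b : nat, (x ^+ a == x ^+ b) = (a == b).

Lemma qpoch_recr (a : R) k : qpoch x a k.+1 = qpoch x a k * (1 - x ^+ k * a).
Proof. by rewrite /qpoch big_ord_recr. Qed.

Lemma qpoch_recl (a : R) k : qpoch x a k.+1 = (1 - a) * qpoch x (x * a) k.
Proof.
rewrite /qpoch big_ord_recl /= expr0 mul1r; congr (_ * _).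
by apply: eq_bigr => i _; rewrite exprSr mulrA.
Qed.

Lemma qpoch0 (a : R) : qpoch x a 0 = 1.
Proof. by rewrite /qpoch big_ord0. Qed.

Definition alpha n k (c : R) :=
  qpoch x (x ^+ n)^-1 k * x ^+ k * qpoch x (c * x ^+ k) (n - k) / gA x k.

Lemma alpha_out n c : alpha n n.+1 c = 0.
Proof.
rewrite /alpha qpoch_recr mulfV ?subrr ?mulr0 ?mul0r //.
exact: expf_neq0.
Qed.

Lemma alpha_0 n c : alpha n.+1 0 c = alpha n 0 c * (1 - c * x ^+ n).
Proof.
rewrite /alpha !subn0 !qpoch0 !expr0 !mulr1 !mul1r qpoch_recr.
by rewrite gA0 !divr1 (mulrC c).
Qed.

Lemma xinv_shift m : x * (x ^+ m.+1)^-1 = (x ^+ m)^-1.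
Proof. by rewrite exprS invfM mulrA mulfV // mul1r. Qed.

Lemma alpha_step n k c : (k <= n)%N ->
  alpha n.+1 k.+1 c =
  alpha n k.+1 c * ((x ^+ k.+1)^-1 - c * x ^+ n) - alpha n k c * (x ^+ k)^-1.
Proof.
have Xn := expf_neq0 _ x_neq0.
have Hs := subx_neq0 xpow_eq.
have HA := gA_neq0 xpow_eq.
rewrite leq_eqVlt => /orP [/eqP ->|Hk].
  rewrite alpha_out mul0r add0r /alpha !subnn !qpoch0 !mulr1 qpoch_recl xinv_shift.
  rewrite gA_rec.
  have := Hs n.+1; have := HA n; have := Xn n.
  rewrite !exprS => H1 H2 H3.
  by field; rewrite ?H1 ?H2 ?H3.
have [r Hr] : exists r, n = (k + r.+1)%N.
  by exists (n - k.+1)%N; rewrite addnS -addSn subnKC.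
subst n.
rewrite /alpha subSS.
have -> : (k + r.+1 - k = r.+1)%N by rewrite addKn.
have -> : (k + r.+1 - k.+1 = r)%N by rewrite addnS subSS addKn.
rewrite (qpoch_recl (x ^+ (k + r.+1).+1)^-1) xinv_shift.
rewrite (qpoch_recr (x ^+ (k + r.+1))^-1 k).
rewrite (qpoch_recl (c * x ^+ k)) (qpoch_recr (c * x ^+ k.+1)).
have -> : x * (c * x ^+ k) = c * x ^+ k.+1 by rewrite exprS; ring.
rewrite gA_rec.
set P := qpoch x (x ^+ (k + r.+1))^-1 k.
set Q := qpoch x (c * x ^+ k.+1) r.
have := Hs k.+1 isT; have := HA k; have := Xn k; have := Xn r.
rewrite !exprS !exprD !exprS => H1 H2 H3 H4.
by field; rewrite ?H1 ?H2 ?H3 ?H4 ?x_neq0.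
Qed.

Lemma newton n (b c : R) :
  \sum_(k < n.+1) alpha n k c * qpoch x b k = \prod_(i < n) (b - c * x ^+ i).
Proof.
elim: n => [|n IH].
  rewrite big_ord1 big_ord0 /alpha subn0 !qpoch0 expr0 gA0 !mulr1.
  by rewrite divr1.
rewrite [RHS]big_ord_recr /= -IH mulr_suml.
have Xn := expf_neq0 _ x_neq0.
have E1 : forall k : 'I_n.+1, alpha n k c * qpoch x b k * (b - c * x ^+ n) =
   alpha n k c * ((x ^+ k)^-1 - c * x ^+ n) * qpoch x b k
   - alpha n k c * (x ^+ k)^-1 * qpoch x b k.+1.
  move=> k; rewrite qpoch_recr; have := Xn k => H.
  by field.
rewrite (eq_bigr _ (fun k _ => E1 k)) sumrB.
rewrite big_ord_recl /=.
have E2 : forall k : 'I_n.+1, alpha n.+1 (bump 0 k) c * qpoch x b (bump 0 k) =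
   alpha n k.+1 c * ((x ^+ k.+1)^-1 - c * x ^+ n) * qpoch x b k.+1
   - alpha n k c * (x ^+ k)^-1 * qpoch x b k.+1.
  move=> k; rewrite /bump /= add1n alpha_step; last by rewrite -ltnS.
  by rewrite mulrBl.
rewrite (eq_bigr _ (fun k _ => E2 k)) sumrB addrA; congr (_ - _).
rewrite [in RHS]big_ord_recl big_ord_recr /= alpha_out !mul0r addr0 alpha_0.
rewrite expr0 invr1 qpoch0 mulr1 addrC; congr (_ + _).
Qed.

End Newton.


Section Spec.
Variable R : fieldType.
Variable x : R.
Hypothesis x_neq0 : x != 0.
Hypothesis xpow_eq : forall a b : nat, (x ^+ a == x ^+ b) = (a == b).

Definition cc n k : R :=
  qpoch x (x ^- n) k * qpoch x (x ^+ n.+1) k * x ^+ k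
    / (qpoch x x k * qpoch x x k * qpoch x x k).

Lemma gA_split a r : gA x (a + r) = gA x a * qpoch x (x ^+ a.+1) r.
Proof.
elim: r => [|r IH]; first by rewrite addn0 qpoch0 mulr1.
rewrite addnS gA_rec IH qpoch_recr -exprD mulrA.
by rewrite addnS addnC.
Qed.

Lemma sum_spec n j :
  \sum_(k < n.+1) cc n k * gFc x k j =
  (1 - x) * gA x j ^+ 2 / gA x (n + j).+1 * \prod_(i < n) (x ^+ n.+1 - x ^+ j.+2 * x ^+ i).
Proof.
rewrite -newton // mulr_sumr; apply: eq_bigr => [[k Hk]] _ /=.
have Hkn : (k <= n)%N by rewrite -ltnS.
have HA := gA_neq0 xpow_eq.
have Xn := expf_neq0 _ x_neq0.
have Esplit := gA_split (k + j).+1 (n - k).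
have Hidx : ((k + j).+1 + (n - k) = (n + j).+1)%N.
  by rewrite addSn -addnA (addnC j) addnA subnKC.
rewrite Hidx in Esplit.
have Hex : x ^+ (k + j).+2 = x ^+ j.+2 * x ^+ k by rewrite -exprD; congr (x ^+ _); rewrite !addSn addnC.
rewrite Hex in Esplit.
have HAn := HA (n + j).+1.
rewrite Esplit in HAn *.
rewrite /cc /gFc /alpha.
set Q := qpoch x (x ^+ j.+2 * x ^+ k) (n - k).
have := HA (k + j).+1; have := HA k; have := HA j; have := Xn k.
rewrite /gA => H1 H2 H3 H4.
have HQ : Q != 0.
  by move: HAn; rewrite /Q mulf_eq0 negb_or => /andP [].
field. by rewrite H3 H4 andbT; exact: HQ.
Qed.

Lemma prod_zero n j : (j < n)%N -> \prod_(i < n) (x ^+ n.+1 - x ^+ j.+2 * x ^+ i) = 0.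
Proof.
move=> H; apply/eqP/prodf_eq0.
have Hi : (n - j.+1 < n)%N by rewrite ltn_subrL (leq_ltn_trans (leq0n j) H).
exists (Ordinal Hi) => //=.
by rewrite -exprD subr_eq0 xpow_eq addSn subnKC.
Qed.

Lemma prod_nonzero n : \prod_(i < n) (x ^+ n.+1 - x ^+ n.+2 * x ^+ i) != 0.
Proof.
apply/prodf_neq0 => i _.
rewrite -exprD subr_eq0 xpow_eq.
apply/eqP => E; have := leq_addr i n.+2; by rewrite -E ltnn.
Qed.

Lemma qpoch_inv_neq0 n : qpoch x (x ^- n) n != 0.
Proof.
apply/prodf_neq0 => i _.
rewrite subr_eq0; apply/negP => /eqP E.
have : x ^+ n = x ^+ i.
  by rewrite -[LHS]mul1r E mulfVK // expf_neq0.
by move/eqP; rewrite xpow_eq => /eqP Hn; move: (ltn_ord i); rewrite -Hn ltnn.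
Qed.

Lemma qpoch_pow_neq0 n k : qpoch x (x ^+ n.+1) k != 0.
Proof.
apply/prodf_neq0 => i _; rewrite -exprD addnS.
exact: (subx_neq0 xpow_eq).
Qed.

Lemma cc_nn_neq0 n : cc n n != 0.
Proof.
rewrite /cc; apply: mulf_neq0; last by rewrite invr_eq0 !mulf_neq0 // (gA_neq0 xpow_eq).
rewrite !mulf_neq0 //; first exact: qpoch_inv_neq0.
- exact: qpoch_pow_neq0.
- exact: expf_neq0.
Qed.

Lemma size_factor i : size (1 - x%:P ^+ i * gwP x) = 2%N.
Proof.
have -> : 1 - x%:P ^+ i * gwP x =
   (- (x ^+ i.+1 * (x - 1)))%:P * 'X + (1 - x ^+ i.+1)%:P.
  rewrite /gwP /gzP ?rmorphN ?rmorphM ?rmorphB ?polyC1 ?rmorphXn /= ?exprS.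
  ring.
have Hx1 : x - 1 != 0.
  by rewrite subr_eq0; apply/negP => /eqP E; have := xpow_eq 1 0; rewrite expr1 expr0 E eqxx.
have Hc : - (x ^+ i.+1 * (x - 1)) != 0.
  by rewrite oppr_eq0 mulf_neq0 // expf_neq0.
by rewrite size_MXaddC polyC_eq0 (negbTE Hc) size_polyC Hc.
Qed.

Lemma size_geP k : size (geP x k) = k.+1.
Proof.
elim: k => [|k IH]; first by rewrite ge0 size_poly1.
rewrite ge_rec size_mul ?IH ?size_factor ?addn2 //.
  by rewrite -size_poly_eq0 IH.
by rewrite -size_poly_eq0 size_factor.
Qed.

End Spec.


Lemma Pn_eq n : Pn n = \sum_(k < n.+1) cc q n k *: geP q k.
Proof. reflexivity. Qed.

Section Fin.
Variable m : nat -> Qq.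
Hypothesis Hm : is_qBernoulliCarlitz m.

Lemma L_Pn_e n j : Lfun m (Pn n * geP q j) =
  (1 - q) * gA q j ^+ 2 / gA q (n + j).+1 *
    \prod_(i < n) (q ^+ n.+1 - q ^+ j.+2 * q ^+ i).
Proof.
rewrite Pn_eq mulr_suml Lfun_sum -sum_spec; last first.
- exact: qpow_eq.
- exact: q_neq0.
apply: eq_bigr => k _.
rewrite -scalerAl LfunZ; congr (_ * _).
exact: (F_closed Hm).
Qed.

Lemma L_Pn_e_zero n j : (j < n)%N -> Lfun m (Pn n * geP q j) = 0.
Proof.
move=> H; rewrite L_Pn_e prod_zero ?mulr0 //.
exact: qpow_eq.
Qed.

Lemma L_Pn_e_n n : Lfun m (Pn n * geP q n) != 0.
Proof.
rewrite L_Pn_e; apply: mulf_neq0; last first.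
  apply: prod_nonzero; exact: qpow_eq.
apply: mulf_neq0; last by rewrite invr_eq0; apply: gA_neq0; exact: qpow_eq.
apply: mulf_neq0; last by apply: expf_neq0; apply: gA_neq0; exact: qpow_eq.
have := subx_neq0 qpow_eq (isT : (0 < 1)%N); by rewrite expr1.
Qed.

Lemma ortho i j : (j < i)%N -> Lfun m (Pn i * Pn j) = 0.
Proof.
move=> H; rewrite (Pn_eq j) mulr_sumr Lfun_sum big1 // => k _.
rewrite -scalerAr LfunZ L_Pn_e_zero ?mulr0 //.
have := ltn_ord k; rewrite ltnS => Hk; exact: leq_ltn_trans Hk H.
Qed.

Lemma norm n : Lfun m (Pn n * Pn n) = cc q n n * Lfun m (Pn n * geP q n).
Proof.
rewrite [X in _ * X]Pn_eq mulr_sumr Lfun_sum big_ord_recr /= big1 ?add0r.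
  by rewrite -scalerAr LfunZ.
move=> k _; rewrite -scalerAr LfunZ L_Pn_e_zero ?mulr0 //.
Qed.

Lemma size_Pn n : size (Pn n) = n.+1.
Proof.
have Hc : cc q n n != 0 by exact: (cc_nn_neq0 q_neq0 qpow_eq n).
have Hs : size (geP q n) = n.+1 by exact: (size_geP q_neq0 qpow_eq n).
rewrite Pn_eq big_ord_recr /= addrC size_addl size_scale // Hs //.
rewrite ltnS; apply: leq_trans (size_sum _ _ _) _.
apply/bigmax_leqP => k _.
apply: leq_trans (size_scale_leq _ _) _.
by rewrite (size_geP q_neq0 qpow_eq).
Qed.

End Fin.

Unset Implicit Arguments. Set Strict Implicit.

Theorem mainTheorem1 (beta : nat -> Qq) :
  is_qBernoulliCarlitz beta -> moments_of beta Pn.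
Proof.
move=> Hm; split; first exact: m0 Hm.
split; first exact: size_Pn.
split.
  move=> i j Hij; case: (ltngtP i j) => H.
  - by rewrite mulrC (ortho Hm H).
  - exact: (ortho Hm H).
  - by move: Hij; rewrite H.
move=> n; rewrite (norm Hm); apply: mulf_neq0; last exact: L_Pn_e_n.
exact: (cc_nn_neq0 q_neq0 qpow_eq n).
Qed.
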